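(* Let $k$ be odd and, for $1\le m\le n$, let $C_m$ be the set of positions with exactly $m$ coordinates in $\{0,k-1\}$ and all other coordinates equal to $(k-1)/2$. Then every combination $g$ satisfies $g(C_m)=C_m$ for all $m$, and $$\prod_{m=1}^{n}\operatorname{sgn}\big(g|_{C_m}\big)=1.$$ Equivalently, the quantity $C=\prod_{m=1}^n\operatorname{sgn}(\sigma_m)$, where $\sigma_m$ is the permutation of the cubies of $C_m$ relating a state to a fixed reference state, is preserved by every combination.
   Context: Fix integers $k\ge2$, $n\ge3$, $M=\{0,\dots,k-1\}$. Positions are $p\in M^n$. For distinct $i,j$, $\psi_{i,j}:M^n\to M^n$ is $(\psi_{i,j}p)_i=k-1-p_j$, $(\psi_{i,j}p)_j=p_i$, other coordinates unchanged. A move is given by distinct $i,j$ and constants $c_l\in M$ ($l\notin\{i,j\}$): it sends each position $p$ with $p_l=c_l$ ($l\notin\{i,j\}$) to $\psi_{i,j}(p)$ and fixes the other positions; a combination is a finite sequence of moves, regarded as the composite permutation of $M^n$. *)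

(* Defs.v *)
From HB Require Import structures.
From mathcomp Require Import all_boot all_order all_algebra all_fingroup.
Set Implicit Arguments. Unset Strict Implicit. Unset Printing Implicit Defensive.

Definition pos (n k : nat) := {ffun 'I_n -> 'I_k}.

Definition psi (n k : nat) (i j : 'I_n) (p : pos n k) : pos n k :=
  [ffun l => if l == i then rev_ord (p j) else if l == j then p i else p l].

(* The move given by i, j and constants c_l (l not in {i,j}); the entries
   c i, c j are irrelevant. *)
Definition move_fun (n k : nat) (i j : 'I_n) (c : pos n k) (p : pos n k) : pos n k :=
  if [forall l, ((l != i) && (l != j)) ==> (p l == c l)] then psi i j p else p.

Definition apply_moves (n k : nat) (s : seq ('I_n * 'I_n * pos n k)) (p : pos n k)
  : pos n k :=
  foldl (fun q m => move_fun m.1.1 m.1.2 m.2 q) p s.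

Definition is_combination (n k : nat) (g : {perm pos n k}) : Prop :=
  exists s : seq ('I_n * 'I_n * pos n k),
    all (fun m => m.1.1 != m.1.2) s /\ forall p, g p = apply_moves s p.

Definition Cset (n k m : nat) : {set pos n k} :=
  [set p : pos n k |
    [forall l, ((p l : nat) \notin [:: 0; k.-1]) ==> ((p l : nat) == k./2)] &&
    (#|[set l | (p l : nat) \in [:: 0; k.-1]]| == m)].

(* Main.v *)
Require Import Defs.
From HB Require Import structures.
From mathcomp Require Import all_boot all_order all_algebra all_fingroup.
From mathcomp Require Import zify.
Import GRing.Theory.
Set Implicit Arguments. Unset Strict Implicit. Unset Printing Implicit Defensive.

Lemma tpermE' (T : finType) (x y z : T) :
  tperm x y z = if z == x then y else if z == y then x else z.
Proof. by rewrite permE /=. Qed.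

Lemma odd4 (T : finType) (r : {perm T}) (a b c d : T) :
  a != b -> a != c -> a != d -> b != c -> b != d -> c != d ->
  r a = b -> r b = c -> r c = d -> r d = a ->
  (forall x, x != a -> x != b -> x != c -> x != d -> r x = x) ->
  odd_perm r.
Proof.
move=> ab ac ad bc bd cd ra rb rc rd rx.
have -> : r = (tperm a b * tperm a c * tperm a d)%g.
  have ba := ab; rewrite eq_sym in ba. have ca := ac; rewrite eq_sym in ca.
  have da := ad; rewrite eq_sym in da. have cb := bc; rewrite eq_sym in cb.
  have db := bd; rewrite eq_sym in db. have dc := cd; rewrite eq_sym in dc.
  apply/permP=> x; rewrite !permM.
  have [->|xa] := eqVneq x a; first by rewrite ra; rewrite [tperm a b _]tpermE' ?eqxx ?(negbTE ab) ?(negbTE ba) ?(negbTE bc) ?(negbTE cb) ?(negbTE bd) ?(negbTE db) ?(negbTE ac) ?(negbTE ca) ?(negbTE ad) ?(negbTE da) ?(negbTE cd) ?(negbTE dc) /=; rewrite [tperm a c _]tpermE' ?eqxx ?(negbTE ab) ?(negbTE ba) ?(negbTE bc) ?(negbTE cb) ?(negbTE bd) ?(negbTE db) ?(negbTE ac) ?(negbTE ca) ?(negbTE ad) ?(negbTE da) ?(negbTE cd) ?(negbTE dc) /=; rewrite [tperm a d _]tpermE' ?eqxx ?(negbTE ab) ?(negbTE ba) ?(negbTE bc) ?(negbTE cb) ?(negbTE bd) ?(negbTE db) ?(negbTE ac) ?(negbTE ca) ?(negbTE ad) ?(negbTE da) ?(negbTE cd) ?(negbTE dc) /=.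
  have [->|xb] := eqVneq x b; first by rewrite rb; rewrite [tperm a b _]tpermE' ?eqxx ?(negbTE ab) ?(negbTE ba) ?(negbTE bc) ?(negbTE cb) ?(negbTE bd) ?(negbTE db) ?(negbTE ac) ?(negbTE ca) ?(negbTE ad) ?(negbTE da) ?(negbTE cd) ?(negbTE dc) /=; rewrite [tperm a c _]tpermE' ?eqxx ?(negbTE ab) ?(negbTE ba) ?(negbTE bc) ?(negbTE cb) ?(negbTE bd) ?(negbTE db) ?(negbTE ac) ?(negbTE ca) ?(negbTE ad) ?(negbTE da) ?(negbTE cd) ?(negbTE dc) /=; rewrite [tperm a d _]tpermE' ?eqxx ?(negbTE ab) ?(negbTE ba) ?(negbTE bc) ?(negbTE cb) ?(negbTE bd) ?(negbTE db) ?(negbTE ac) ?(negbTE ca) ?(negbTE ad) ?(negbTE da) ?(negbTE cd) ?(negbTE dc) /=.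
  have [->|xc] := eqVneq x c; first by rewrite rc; rewrite [tperm a b _]tpermE' ?eqxx ?(negbTE ab) ?(negbTE ba) ?(negbTE bc) ?(negbTE cb) ?(negbTE bd) ?(negbTE db) ?(negbTE ac) ?(negbTE ca) ?(negbTE ad) ?(negbTE da) ?(negbTE cd) ?(negbTE dc) /=; rewrite [tperm a c _]tpermE' ?eqxx ?(negbTE ab) ?(negbTE ba) ?(negbTE bc) ?(negbTE cb) ?(negbTE bd) ?(negbTE db) ?(negbTE ac) ?(negbTE ca) ?(negbTE ad) ?(negbTE da) ?(negbTE cd) ?(negbTE dc) /=; rewrite [tperm a d _]tpermE' ?eqxx ?(negbTE ab) ?(negbTE ba) ?(negbTE bc) ?(negbTE cb) ?(negbTE bd) ?(negbTE db) ?(negbTE ac) ?(negbTE ca) ?(negbTE ad) ?(negbTE da) ?(negbTE cd) ?(negbTE dc) /=.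
  have [->|xd] := eqVneq x d; first by rewrite rd; rewrite [tperm a b _]tpermE' ?eqxx ?(negbTE ab) ?(negbTE ba) ?(negbTE bc) ?(negbTE cb) ?(negbTE bd) ?(negbTE db) ?(negbTE ac) ?(negbTE ca) ?(negbTE ad) ?(negbTE da) ?(negbTE cd) ?(negbTE dc) /=; rewrite [tperm a c _]tpermE' ?eqxx ?(negbTE ab) ?(negbTE ba) ?(negbTE bc) ?(negbTE cb) ?(negbTE bd) ?(negbTE db) ?(negbTE ac) ?(negbTE ca) ?(negbTE ad) ?(negbTE da) ?(negbTE cd) ?(negbTE dc) /=; rewrite [tperm a d _]tpermE' ?eqxx ?(negbTE ab) ?(negbTE ba) ?(negbTE bc) ?(negbTE cb) ?(negbTE bd) ?(negbTE db) ?(negbTE ac) ?(negbTE ca) ?(negbTE ad) ?(negbTE da) ?(negbTE cd) ?(negbTE dc) /=.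
  by rewrite rx // !tpermE' (negbTE xa) (negbTE xb) (negbTE xa) (negbTE xc) (negbTE xa) (negbTE xd).
by rewrite !odd_permM !odd_tperm ab ac ad.
Qed.

Lemma odd_id (T : finType) (r : {perm T}) : (forall x, r x = x) -> odd_perm r = false.
Proof. move=> rx; have -> : r = 1%g by apply/permP=> x; rewrite perm1 rx.
exact: odd_perm1. Qed.

Section Moves.
Variables (n k : nat) (hk : (2 <= k)%N) (hodd : odd k).

Definition ext (v : 'I_k) : bool := (v : nat) \in [:: 0; k.-1].
Definition isH (v : 'I_k) : bool := (v : nat) == k./2.

Lemma ext_rev v : ext (rev_ord v) = ext v.
Proof. rewrite /ext !inE /=; have := ltn_ord v; lia. Qed.

Lemma kdec : k = (k./2 + k./2).+1.
Proof. have := odd_double_half k; rewrite hodd -addnn; lia. Qed.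

Lemma isH_rev v : isH (rev_ord v) = isH v.
Proof. rewrite /isH /=; have := ltn_ord v; have := kdec; lia. Qed.

Lemma CsetE m (x : pos n k) : (x \in Cset n k m) =
  [forall l, ~~ ext (x l) ==> isH (x l)] && (#|[set l | ext (x l)]| == m).
Proof. by rewrite inE. Qed.

Lemma Cset_perm m (x y : pos n k) (s : {perm 'I_n}) :
  (forall l, ext (y l) = ext (x (s l))) -> (forall l, isH (y l) = isH (x (s l))) ->
  (y \in Cset n k m) = (x \in Cset n k m).
Proof.
move=> he hh; rewrite !CsetE; congr andb.
  apply/forallP/forallP => H l.
    by have := H (s^-1 l)%g; rewrite he hh permKV.
  by rewrite he hh; apply: H.
have -> : [set l | ext (y l)] = s @^-1: [set l | ext (x l)].
  by apply/setP=> l; rewrite !inE he.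
by rewrite card_preimset //; apply: perm_inj.
Qed.

Variables (i j : 'I_n) (hij : i != j) (c : pos n k).

Lemma hji : j != i. Proof. by rewrite eq_sym. Qed.

Definition cnd (x : pos n k) := [forall l, ((l != i) && (l != j)) ==> (x l == c l)].

Lemma psi_off (x : pos n k) l : l != i -> l != j -> psi i j x l = x l.
Proof. by rewrite ffunE => /negbTE-> /negbTE->. Qed.

Lemma cnd_psi (x : pos n k) : cnd (psi i j x) = cnd x.
Proof.
apply: eq_forallb => l /=; case E: ((l != i) && (l != j)) => //=.
by case/andP: E => li lj; rewrite psi_off.
Qed.

Lemma psi_inj : injective (@psi n k i j).
Proof.
move=> x y e; have ei := congr1 (fun f : pos n k => f i) e; have ej := congr1 (fun f : pos n k => f j) e.
rewrite /= !ffunE eqxx in ei; rewrite /= !ffunE eqxx (negbTE hji) in ej.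
have ej' := rev_ord_inj ei.
apply/ffunP=> l; case: (eqVneq l i) => [->//|li]; case: (eqVneq l j) => [->//|lj].
by have := congr1 (fun f : pos n k => f l) e; rewrite /= !psi_off.
Qed.

Lemma move_funE (x : pos n k) : move_fun i j c x = if cnd x then psi i j x else x.
Proof. by []. Qed.

Lemma move_inj : injective (move_fun i j c).
Proof.
move=> x y; rewrite !move_funE.
case cx: (cnd x); case cy: (cnd y) => //.
- exact: psi_inj.
- by move=> e; move: cy; rewrite -e cnd_psi cx.
- by move=> e; move: cx; rewrite e cnd_psi cy.
Qed.

Definition Mv := perm move_inj.

Lemma Cset_move m (x : pos n k) : (move_fun i j c x \in Cset n k m) = (x \in Cset n k m).
Proof.
rewrite move_funE; case: (cnd x) => //.
apply: (@Cset_perm m x (psi i j x) (tperm i j)) => l; rewrite ffunE tpermE';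
  case: (l == i) => /=; rewrite ?ext_rev ?isH_rev //; by case: (l == j).
Qed.

Lemma Mv_N m : Mv \in ('N(Cset n k m | 'P))%g.
Proof. by apply/astabsP => x /=; rewrite /aperm permE Cset_move. Qed.

Definition setij (a b : 'I_k) : pos n k :=
  [ffun l => if l == i then a else if l == j then b else c l].

Lemma setij_i a b : setij a b i = a. Proof. by rewrite ffunE eqxx. Qed.
Lemma setij_j a b : setij a b j = b. Proof. by rewrite ffunE eqxx (negbTE hji). Qed.

Lemma cnd_setij a b : cnd (setij a b).
Proof.
by apply/forallP => l; apply/implyP => /andP[li lj]; rewrite ffunE (negbTE li) (negbTE lj).
Qed.

Lemma setij_cnd (x : pos n k) : cnd x -> x = setij (x i) (x j).
Proof.
move=> /forallP H; apply/ffunP=> l; rewrite ffunE.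
case: (eqVneq l i) => [->//|li]; case: (eqVneq l j) => [->//|lj].
by have /implyP := H l; rewrite li lj => /(_ isT) /eqP.
Qed.

Lemma move_setij a b : move_fun i j c (setij a b) = setij (rev_ord b) a.
Proof.
rewrite move_funE cnd_setij; apply/ffunP => l; rewrite !ffunE !eqxx (negbTE hji).
by case: (eqVneq l i) => // li; case: (eqVneq l j).
Qed.

Lemma setij_neq a b a' b' : (a != a') || (b != b') -> setij a b != setij a' b'.
Proof.
case/orP => ne; apply/eqP => e.
  by have := congr1 (fun f : pos n k => f i) e; rewrite /= !setij_i => e'; rewrite e' eqxx in ne.
by have := congr1 (fun f : pos n k => f j) e; rewrite /= !setij_j => e'; rewrite e' eqxx in ne.
Qed.

Definition good := [forall l, ((l != i) && (l != j)) ==> (ext (c l) || isH (c l))].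
Definition t0 := #|[set l | (l != i) && (l != j) && ext (c l)]|.

Lemma card_setij a b : #|[set l | ext (setij a b l)]| = (t0 + ext a + ext b)%N.
Proof.
rewrite /t0 -!sum1dep_card big_mkcond /= (bigD1 i) //= (bigD1 j) //= ?hji //.
rewrite [in RHS]big_mkcondr /= setij_i setij_j.
rewrite [in X in _ = X](eq_bigr (fun l => if ext (setij a b l) then 1%N else 0%N)); last first.
  by move=> l /andP[li lj]; rewrite ffunE (negbTE li) (negbTE lj).
by case: (ext a); case: (ext b) => /=; lia.
Qed.


Lemma two_ext t (x y : bool) : t.+2 = (t + x + y)%N -> x && y.
Proof. by case: x; case: y => /=; lia. Qed.
Lemma one_ext t (x y : bool) : t.+1 = (t + x + y)%N -> y = ~~ x.
Proof. by case: x; case: y => /=; lia. Qed.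
Lemma zero_ext t (x y : bool) : (t + x + y)%N != t.+1 -> (t + x + y)%N != t.+2 -> ~~ x && ~~ y.
Proof. by case: x; case: y => /=; lia. Qed.

Lemma orH (v : 'I_k) : (ext v || isH v) -> ~~ ext v ==> isH v.
Proof. by case: (ext v). Qed.

Lemma setij_in a b : good -> (ext a || isH a) -> (ext b || isH b) ->
  setij a b \in Cset n k (t0 + ext a + ext b).
Proof.
move=> /forallP gd ha hb; rewrite CsetE card_setij eqxx andbT; apply/forallP => l.
case: (eqVneq l i) => [->|li]; first by rewrite setij_i; apply: orH.
case: (eqVneq l j) => [->|lj]; first by rewrite setij_j; apply: orH.
rewrite ffunE (negbTE li) (negbTE lj); apply: orH.
by have /implyP := gd l; rewrite li lj; apply.
Qed.

Lemma setij_out m a b : setij a b \in Cset n k m ->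
  [/\ ext a || isH a, ext b || isH b & m = (t0 + ext a + ext b)%N].
Proof.
rewrite CsetE card_setij => /andP[/forallP H /eqP <-]; split => //.
  by have := H i; rewrite setij_i; case: (ext a).
by have := H j; rewrite setij_j; case: (ext b).
Qed.

Lemma bad_ncnd m (x : pos n k) : ~~ good -> x \in Cset n k m -> ~~ cnd x.
Proof.
move=> /forallPn[l0]; rewrite negb_imply => /andP[/andP[l0i l0j] hb].
rewrite CsetE => /andP[/forallP H _]; apply/negP => /forallP C.
have /implyP := C l0; rewrite l0i l0j => /(_ isT) /eqP e.
have := H l0; rewrite e; move: hb; rewrite negb_or => /andP[/negbTE -> /negbTE ->].
done.
Qed.

Lemma k0 : (0 < k)%N. Proof. lia. Qed.
Lemma kH : (k./2 < k)%N. Proof. have := kdec; lia. Qed.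
Definition z : 'I_k := Ordinal k0.
Definition K : 'I_k := rev_ord z.
Definition H : 'I_k := Ordinal kH.

Lemma ext_z : ext z. Proof. by rewrite /ext inE eqxx. Qed.
Lemma ext_K : ext K. Proof. rewrite /ext !inE /=; lia. Qed.
Lemma ext_H : ext H = false. Proof. rewrite /ext !inE /=; have := kdec; lia. Qed.
Lemma isH_H : isH H. Proof. by rewrite /isH eqxx. Qed.
Lemma rev_H : rev_ord H = H. Proof. apply/val_inj => /=; have := kdec; lia. Qed.
Lemma rev_K : rev_ord K = z. Proof. exact: rev_ordK. Qed.
Lemma zK : z != K. Proof. rewrite -val_eqE /=; lia. Qed.
Lemma zH : z != H. Proof. rewrite -val_eqE /=; have := kdec; lia. Qed.
Lemma KH : K != H. Proof. rewrite -val_eqE /=; have := kdec; lia. Qed.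
Lemma extP v : ext v -> v = z \/ v = K.
Proof.
rewrite /ext !inE => /orP[] e; [left|right]; apply/val_inj => /=; have := ltn_ord v; lia.
Qed.
Lemma isHP v : isH v -> v = H.
Proof. by rewrite /isH => e; apply/val_inj => /=; apply/eqP. Qed.


Lemma odd_restr m :
  odd_perm (restr_perm (Cset n k m) Mv) = good && ((m == t0.+1) || (m == t0.+2)).
Proof.
set S := Cset n k m.
have rE x : restr_perm S Mv x = if x \in S then move_fun i j c x else x.
  case: ifP => xS; first by rewrite restr_permE ?Mv_N // permE.
  by rewrite (out_perm (restr_perm_on _ _)) ?xS.
case: (boolP good) => gd /=; last first.
  apply: odd_id => x; rewrite rE; case: ifP => // xS.
  by rewrite move_funE (negbTE (bad_ncnd gd xS)).
have inS a b : (ext a || isH a) -> (ext b || isH b) -> m = (t0 + ext a + ext b)%N ->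
    setij a b \in S.
  by move=> ha hb me; rewrite /S me; apply: setij_in.
have eK : ext K || isH K by rewrite ext_K.
have ez : ext z || isH z by rewrite ext_z.
have eH : ext H || isH H by rewrite isH_H orbT.
have Kz : K != z by rewrite eq_sym zK.
have Hz : H != z by rewrite eq_sym zH.
have HK : H != K by rewrite eq_sym KH.
case: (boolP (m == t0.+2)) => [/eqP m2|n2].
  rewrite orbT.
  have Sa a b : ext a -> ext b -> setij a b \in S.
    by move=> ea eb; apply: inS; rewrite ?ea ?eb // m2 !addn1.
  apply: (@odd4 _ _ (setij z z) (setij K z) (setij K K) (setij z K));
    try (by apply: setij_neq; rewrite ?zK ?Kz ?orbT);
    try (by rewrite rE Sa ?ext_z ?ext_K // move_setij ?rev_K).
  move=> x h1 h2 h3 h4; rewrite rE; case: ifP => // xS.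
  case: (boolP (cnd x)) => cx; last by rewrite move_funE (negbTE cx).
  exfalso; move: h1 h2 h3 h4 xS; rewrite (setij_cnd cx).
  move: (x i) (x j) => a b h1 h2 h3 h4 /setij_out[ha hb me].
  have /andP[ea eb] := two_ext (etrans (esym m2) me).
  by move: h1 h2 h3 h4; case: (extP ea) => ->; case: (extP eb) => ->; rewrite ?eqxx.
case: (boolP (m == t0.+1)) => [/eqP m1|n1].
  rewrite /=.
  have Sa a b : ext a -> isH b -> setij a b \in S.
    by move=> ea eb; apply: inS; rewrite ?ea ?eb ?orbT // m1 (isHP eb) ext_H addn0 addn1.
  have Sb a b : isH a -> ext b -> setij a b \in S.
    by move=> ea eb; apply: inS; rewrite ?ea ?eb ?orbT // m1 (isHP ea) ext_H addn0 addn1.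
  apply: (@odd4 _ _ (setij z H) (setij H z) (setij K H) (setij H K));
    try (by apply: setij_neq; rewrite ?zK ?Kz ?zH ?Hz ?KH ?HK ?orbT);
    try (by rewrite rE Sa ?ext_z ?ext_K ?isH_H // move_setij ?rev_K ?rev_H);
    try (by rewrite rE Sb ?ext_z ?ext_K ?isH_H // move_setij ?rev_K ?rev_H).
  move=> x h1 h2 h3 h4; rewrite rE; case: ifP => // xS.
  case: (boolP (cnd x)) => cx; last by rewrite move_funE (negbTE cx).
  exfalso; move: h1 h2 h3 h4 xS; rewrite (setij_cnd cx).
  move: (x i) (x j) => a b h1 h2 h3 h4 /setij_out[ha hb me].
  case: (boolP (ext a)) => ea.
    have eb : ~~ ext b by rewrite (one_ext (etrans (esym m1) me)) ea.
    rewrite (negbTE eb) /= in hb; rewrite (isHP hb) in h1 h2 h3 h4.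
    by move: h1 h2 h3 h4; case: (extP ea) => ->; rewrite ?eqxx.
  rewrite (negbTE ea) /= in ha; rewrite (isHP ha) in h1 h2 h3 h4.
  have eb : ext b by rewrite (one_ext (etrans (esym m1) me)) ea.
  by move: h1 h2 h3 h4; case: (extP eb) => ->; rewrite ?eqxx.
rewrite /=.
apply: odd_id => x; rewrite rE; case: ifP => // xS.
case: (boolP (cnd x)) => cx; last by rewrite move_funE (negbTE cx).
move: xS; rewrite (setij_cnd cx); move: (x i) (x j) => a b /setij_out[ha hb me].
have /andP[ea eb] : ~~ ext a && ~~ ext b by apply: (@zero_ext t0); rewrite -me.
rewrite (negbTE ea) in ha; rewrite (negbTE eb) in hb.
by rewrite (isHP ha) (isHP hb) move_setij rev_H.
Qed.



Lemma t0_le : (t0.+2 <= n)%N.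
Proof.
have := max_card [set l | ext (setij z z l)]; rewrite card_setij card_ord ext_z.
by rewrite !addn1.
Qed.

Local Open Scope ring_scope.

Lemma prod_move :
  \prod_(1 <= m < n.+1) ((-1) ^+ odd_perm (restr_perm (Cset n k m) Mv) : int) = 1.
Proof.
under eq_bigr do rewrite odd_restr.
case: (boolP good) => gd /=; last by rewrite big1.
have tn := t0_le.
rewrite (big_cat_nat (n:=t0.+1)); try lia.
rewrite (big_cat_nat (m:=t0.+1) (n:=t0.+2)); try lia.
rewrite (big_cat_nat (m:=t0.+2) (n:=t0.+3)); try lia.
rewrite !big_nat1.
rewrite big_nat_cond big1; last first.
  by move=> m /andP[/andP[_ hm] _]; rewrite (ltn_eqF hm) (ltn_eqF (ltn_trans hm (ltnSn _))).
rewrite (@big_nat_cond _ _ _ t0.+3) big1; last first.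
  move=> m /andP[/andP[hm _] _].
  by rewrite (gtn_eqF hm) (gtn_eqF (ltn_trans (ltnSn _) hm)).
rewrite !eqxx (gtn_eqF (ltnSn _)) (ltn_eqF (ltnSn _)) /=.
by rewrite mul1r mulr1 expr1 mulrNN mulr1.
Qed.

End Moves.

Local Open Scope ring_scope.

Definition Qsign (n k : nat) (h : {perm pos n k}) : int :=
  \prod_(1 <= m < n.+1) ((-1) ^+ odd_perm (restr_perm (Cset n k m) h) : int).

Lemma comb_ind (n k : nat) (hk : (2 <= k)%N) (hodd : odd k)
  (s : seq ('I_n * 'I_n * pos n k)) :
  all (fun m => m.1.1 != m.1.2) s ->
  exists h : {perm pos n k}, (forall p, h p = apply_moves s p) /\
    (forall m, h \in ('N(Cset n k m | 'P))%g) /\ Qsign h = 1.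
Proof.
elim: s => [|[[i j] c] s IH] /=.
  move=> _; exists 1%g; split; first by move=> p; rewrite perm1.
  split; first by move=> m; apply: group1.
  by rewrite /Qsign big1 // => m _; rewrite morph1 odd_perm1.
case/andP => hij /IH [h [hE [hN hQ]]].
exists (Mv hij c * h)%g; split.
  by move=> p; rewrite permM hE permE.
split; first by move=> m; rewrite groupM ?Mv_N ?hN.
rewrite /Qsign.
have rM m : restr_perm (Cset n k m) (Mv hij c * h)%g =
    (restr_perm (Cset n k m) (Mv hij c) * restr_perm (Cset n k m) h)%g.
  by rewrite (morphM (restr_perm_morphism (Cset n k m))) ?Mv_N ?hN.
under eq_bigr => m _ do rewrite rM odd_permM signr_addb.
by rewrite big_split /= (prod_move hk hodd) mul1r.
Qed.

Unset Implicit Arguments.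

Theorem mainTheorem10 (k n : nat) (hk : (2 <= k)%N) (hodd : odd k) (hn : (3 <= n)%N)
  (g : {perm pos n k}) (hg : is_combination g) :
  (forall m : nat, (1 <= m <= n)%N -> g @: Cset n k m = Cset n k m) /\
  \prod_(1 <= m < n.+1) ((-1) ^+ odd_perm (restr_perm (Cset n k m) g) : int) = 1.
Proof.
case: hg => s [hs gE].
have [h [hE [hN hQ]]] := comb_ind hk hodd hs.
have -> : g = h by apply/permP => p; rewrite gE hE.
split; last exact: hQ.
move=> m _; have /astabsP hm := hN m.
apply/setP => y; apply/imsetP/idP => [[x xS ->]|yS].
  by have := hm x; rewrite /aperm => ->.
exists ((h^-1)%g y); last by rewrite -permM mulVg perm1.
have e : h ((h^-1)%g y) = y by rewrite -permM mulVg perm1.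
rewrite -(hm ((h^-1)%g y)); move: yS; rewrite -{1}e; exact: id.
Qed.
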